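(* Let $G_\sigma$ be an ordered undirected graph on vertex set $\{1,\dots,p\}$ with edge set $E_\sigma$, let $U$ be a $p\times p$ positive definite matrix and let $\boldsymbol{\delta}=(\delta_1,\dots,\delta_p)$ with $\delta_i>0$ for all $i$. Then $$\int \pi^*_{U,\boldsymbol{\delta}}(L_I,D)\,d(L_I,D)<\infty,$$ and, under the probability distribution obtained by normalizing $\pi^*_{U,\boldsymbol{\delta}}$ (viewed as a distribution of $\Omega=LDL^T\in\mathbb{P}_{G_\sigma}$), $E[\Omega_{ij}]$ exists and is finite for all $i,j$.
   Context: For an ordered graph $G_\sigma$ on $\{1,\dots,p\}$ with (undirected) edge set $E_\sigma$, let $\mathbb{P}_{G_\sigma}$ be the set of $p\times p$ symmetric positive definite matrices $\Omega$ with $\Omega_{ij}=0$ whenever $i\neq j$ and $(i,j)\notin E_\sigma$. Every positive definite $\Omega$ has a unique modified Cholesky decomposition $\Omega=LDL^T$, $L$ lower triangular with unit diagonal, $D=\mathrm{diag}(D_1,\dots,D_p)$ with $D_i>0$. Let $L_I=\{L_{ij}: i>j,\ (i,j)\in E_\sigma\}$ (the independent entries); the map $\Omega\mapsto(L_I,D)$ is a bijection from $\mathbb{P}_{G_\sigma}$ onto $\mathbb{R}^{|L_I|}\times(0,\infty)^p$ (the other below-diagonal entries of $L$ are determined by the constraints $\Omega_{ij}=0$). Let $\nu_j=|\{i: i>j,(i,j)\in E_\sigma\}|$. The (unnormalized) generalized $G$-Wishart density with parameters $U,\boldsymbol\delta$ on $\mathbb{P}_{G_\sigma}$ is $\prod_{i=1}^p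 D_i^{\delta_i/2}\exp(-\tfrac12\mathrm{tr}(\Omega U))$; expressed in the coordinates $(L_I,D)$ (including the Jacobian $\prod_j D_j^{\nu_j}$) it is $$\pi^*_{U,\boldsymbol\delta}(L_I,D)=\Big(\prod_{j=1}^p D_j^{(\delta_j+2\nu_j)/2}\Big)\exp\Big(-\tfrac12\sum_{i=1}^p\sum_{j=1}^p U_{ij}\sum_{k=1}^{\min(i,j)}L_{ik}L_{jk}D_k\Big),$$ integrated with respect to Lebesgue measure on $\mathbb{R}^{|L_I|}\times(0,\infty)^p$. *)

(* Defs.v *)
From HB Require Import structures.
From mathcomp Require Import all_boot all_order all_algebra.
From mathcomp Require Import all_classical all_reals all_analysis.
Set Implicit Arguments. Unset Strict Implicit. Unset Printing Implicit Defensive.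
Import Order.TTheory GRing.Theory Num.Theory.
Local Open Scope ring_scope.
Local Open Scope classical_set_scope.

Section GWishart.
Variable R : realType.
Variable p : nat.

Definition posdef (U : 'M[R]_p) : Prop :=
  U^T = U /\ forall x : 'cV[R]_p, x != 0 -> 0 < (x^T *m U *m x) ord0 ord0.

(* ordered simple undirected graph on the vertices 'I_p (= {1..p} shifted) *)
Definition undirected_graph (E : rel 'I_p) : Prop :=
  symmetric E /\ irreflexive E.

Definition nu (E : rel 'I_p) (j : 'I_p) : nat :=
  #|[set i : 'I_p | (j < i)%N && E i j]|.

(* Construction of the full unit lower triangular L from the independent
   entries x (only x i j with i > j, E i j are used) and D: the remaining
   below-diagonal entries are determined, column by column, by
   Omega_ij = sum_{k<=j} L_ik L_jk D_k = 0 for non-edges (i,j), i > j. *)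
Fixpoint Lcols (E : rel 'I_p) (x : 'I_p -> 'I_p -> R) (D : 'I_p -> R)
  (m : nat) : 'M[R]_p :=
  match m with
  | 0%N => 1%:M
  | m'.+1 =>
    let F := Lcols E x D m' in
    \matrix_(i, j)
      if (j < m')%N then F i j
      else if (j == m' :> nat) then
        (if i == j then 1
         else if (i < j)%N then 0
         else if E i j then x i j
         else - (\sum_(k < p | (k < j)%N) F i k * F j k * D k) / D j)
      else (if i == j then 1 else 0)
  end.

Definition Lmat E x D : 'M[R]_p := Lcols E x D p.

Definition Omega E x D : 'M[R]_p := Lmat E x D *m diag_mx (\row_k D k) *m (Lmat E x D)^T.

Definition pistar E (U : 'M[R]_p) (delta : 'I_p -> R) x (D : 'I_p -> R) : R :=
  (\prod_(j < p) D j `^ ((delta j + 2 * (nu E j)%:R) / 2)) *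
  expR (- (1/2) * \sum_(i < p) \sum_(j < p) U i j *
          \sum_(k < p | (k <= i)%N && (k <= j)%N)
             Lmat E x D i k * Lmat E x D j k * D k).

(* Coordinates: a point of R^{|L_I|} x (0,oo)^p is stored in v : nat -> R,
   with D_j = v j and L_ij = v (p + i*p + j). *)
Definition Dof (v : nat -> R) (j : 'I_p) : R := v j.
Definition xof (v : nat -> R) (i j : 'I_p) : R := v (p + i * p + j)%N.

Definition coords (E : rel 'I_p) : seq nat :=
  iota 0 p ++
  [seq (p + nat_of_ord ij.1 * p + nat_of_ord ij.2)%N |
     ij <- enum [pred ij : 'I_p * 'I_p | (ij.2 < ij.1)%N && E ij.1 ij.2]].

Definition coord_dom (k : nat) : set R :=
  if (k < p)%N then `]0, +oo[%classic else setT.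

(* iterated Lebesgue integral over the listed coordinates (for nonnegative
   integrands this is, by Tonelli, the integral w.r.t. Lebesgue measure on
   R^{|L_I|} x (0,oo)^p) *)
Fixpoint iint (s : seq nat) (f : (nat -> R) -> \bar R) (v : nat -> R) : \bar R :=
  match s with
  | [::] => f v
  | k :: s' =>
    (\int[@lebesgue_measure R]_(t in coord_dom k)
        iint s' f (fun n => if n == k then t else v n))%E
  end.

Definition integral_LD (E : rel 'I_p) (f : (nat -> R) -> \bar R) : \bar R :=
  iint (coords E) f (fun _ => 0).

End GWishart.

(* Main.v *)
Require Import Defs.
Set Implicit Arguments. Unset Strict Implicit. Unset Printing Implicit Defensive.
From HB Require Import structures.
From mathcomp Require Import all_boot all_order all_algebra.
From mathcomp Require Import all_classical all_reals all_analysis.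
From mathcomp Require Import ring lra measurable_realfun.
Import Order.TTheory GRing.Theory Num.Theory.
Import numFieldNormedType.Exports.
Local Open Scope ring_scope.
Local Open Scope classical_set_scope.
Section Sc.
Variable R : realType.

Lemma powexp_bound (b c : R) : 0 <= b -> 0 < c ->
  exists M, forall y, 0 <= y -> y `^ b * expR (- c * y) <= M.
Proof.
move=> b0 c0; exists (1 + expR (b * ln (b / c))) => y y0.
have e1 : expR (- c * y) <= 1 by rewrite expR_le1 mulNr oppr_le0 mulr_ge0 // ltW.
have [->|bp] := eqVneq b 0.
  by rewrite powRr0 mul1r (le_trans e1) // lerDl expR_ge0.
have bp' : 0 < b by rewrite lt_def bp b0.
move: y0; rewrite le_eqVlt => /predU1P[<-|yp].
  by rewrite powR0 // mul0r addr_ge0 // expR_ge0.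
suff h : y `^ b * expR (- c * y) <= expR (b * ln (b / c)) by apply: (le_trans h); lra.
rewrite /powR gt_eqF // -expRD ler_expR.
have z0 : 0 < c * y / b by rewrite divr_gt0 // mulr_gt0.
have := ln_sublinear z0.
rewrite (_ : c * y / b = (y / (b / c))); last by field; rewrite ?gt_eqF.
move=> h.
have h2 : ln (y / (b / c)) = ln y - ln (b / c).
  by rewrite [LHS]ln_div // posrE ?divr_gt0.
rewrite h2 in h.
have : b * (ln y - ln (b / c)) <= b * (y / (b / c)).
  by rewrite ler_pM2l //; exact: ltW.
rewrite (_ : b * (y / (b / c)) = c * y); last by field; rewrite ?gt_eqF.
lra.
Qed.
Definition hh (t : R) : R := (1 + t ^+ 2)^-1.

Lemma perk (d c : R) (nu : nat) : 0 < d -> 0 < c ->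
  exists2 C, 0 <= C & forall (D T : R) (I : finType) (P : pred I) (xs : I -> R),
    #|P| = nu -> 0 < D -> 1 <= T -> (forall i, P i -> xs i ^+ 2 <= T) ->
    D `^ ((d + 2 * nu%:R) / 2) * expR (- c * (D * T)) <=
    C * hh D * \prod_(i | P i) hh (xs i).
Proof.
move=> d0 c0.
pose b := d / 2 + nu%:R.
have b0 : 0 <= b by rewrite addr_ge0 // divr_ge0 // ltW.
have [M1 HM1] := powexp_bound b0 c0.
have b20 : 0 <= b + 2 by rewrite addr_ge0.
have [M2 HM2] := powexp_bound b20 c0.
have M10 : 0 <= M1.
  by apply: le_trans (HM1 0 (lexx _)); rewrite mulr_ge0 // ?powR_ge0 ?expR_ge0.
have M20 : 0 <= M2.
  by apply: le_trans (HM2 0 (lexx _)); rewrite mulr_ge0 // ?powR_ge0 ?expR_ge0.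
exists (2 ^+ nu * (M1 + M2)); first by rewrite mulr_ge0 // ?addr_ge0 // exprn_ge0.
move=> D T I P xs card D0 T1 xsT.
have T0 : 0 < T by apply: lt_le_trans T1.
pose y := D * T.
have y0 : 0 < y by rewrite mulr_gt0.
have Dy : D <= y by rewrite /y ler_peMr // ltW.
have hP : (2 * T)^-1 ^+ nu <= \prod_(i | P i) hh (xs i).
  rewrite -card -prodr_const; apply: ler_prod => i Pi.
  apply/andP; split; first by rewrite invr_ge0 mulr_ge0 // ltW.
  rewrite /hh lef_pV2 ?posrE ?mulr_gt0 //.
  - have := xsT i Pi; lra.
  - by rewrite ltr_wpDr // sqr_ge0.
have nz u : 0 < u -> u != 0 by move=> h; rewrite gt_eqF.
have hD : hh D = (1 + D ^+ 2)^-1 by [].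
have ED : D `^ ((d + 2 * nu%:R) / 2) = D `^ (d / 2) * D ^+ nu.
  rewrite -powR_mulrn ?ltW // -powRD; first by congr powR; field.
  by apply/implyP => _; exact: nz.
have Ey : y `^ b = y `^ (d / 2) * y ^+ nu.
  by rewrite -powR_mulrn ?ltW // -powRD //; apply/implyP => _; exact: nz.
have Ey2 : y `^ (b + 2) = y `^ b * y ^+ 2.
  by rewrite -[2]/(2%:R) -powR_mulrn ?ltW // -powRD //; apply/implyP => _; exact: nz.
have pDy : D `^ (d / 2) <= y `^ (d / 2).
  by apply: ge0_ler_powR => //; rewrite ?divr_ge0 ?ltW // nnegrE ltW.
have key : D `^ ((d + 2 * nu%:R) / 2) * expR (- c * y) * (1 + D ^+ 2) * (2 * T) ^+ nu
   <= 2 ^+ nu * (M1 + M2).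
  rewrite ED exprMn.
  have -> : D `^ (d / 2) * D ^+ nu * expR (- c * y) * (1 + D ^+ 2) * (2 ^+ nu * T ^+ nu)
     = 2 ^+ nu * (D `^ (d / 2) * y ^+ nu * (1 + D ^+ 2) * expR (- c * y)).
    by rewrite /y exprMn; ring.
  rewrite ler_pM2l ?exprn_gt0 //.
  apply: (@le_trans _ _ (y `^ b * expR (- c * y) + y `^ (b + 2) * expR (- c * y))); last first.
    by apply: lerD; [exact: HM1 (ltW y0) | exact: HM2 (ltW y0)].
  rewrite Ey2 Ey.
  have e0 := expR_ge0 (- c * y).
  have py0 : 0 <= y `^ (d / 2) := powR_ge0 _ _.
  have pD0 : 0 <= D `^ (d / 2) := powR_ge0 _ _.
  have yn0 : 0 <= y ^+ nu by rewrite exprn_ge0 // ltW.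
  have D2 : D ^+ 2 <= y ^+ 2 by rewrite ler_pXn2r // ?nnegrE ltW.
  have : D `^ (d / 2) * y ^+ nu * (1 + D ^+ 2) <= y `^ (d / 2) * y ^+ nu * (1 + y ^+ 2).
    apply: ler_pM; rewrite ?mulr_ge0 ?addr_ge0 ?sqr_ge0 //; last by rewrite lerD2l.
    by rewrite ler_pM2r ?exprn_gt0.
  move=> h; apply: le_trans (ler_wpM2r e0 h) _; rewrite le_eqVlt; apply/orP; left; apply/eqP; ring.
have hPpos : 0 < (2 * T)^-1 ^+ nu by rewrite exprn_gt0 // invr_gt0 mulr_gt0.
have hDpos : 0 < hh D by rewrite /hh invr_gt0 ltr_wpDr // sqr_ge0.
apply: (@le_trans _ _ (2 ^+ nu * (M1 + M2) * hh D * (2 * T)^-1 ^+ nu)); last first.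
  apply: ler_wpM2l hP; apply: mulr_ge0; last exact: ltW.
  by apply: mulr_ge0; [exact: exprn_ge0 | exact: addr_ge0].
have Z0 : 0 < (1 + D ^+ 2) * (2 * T) ^+ nu.
  by rewrite mulr_gt0 ?exprn_gt0 ?mulr_gt0 // ltr_wpDr // sqr_ge0.
have -> : 2 ^+ nu * (M1 + M2) * hh D * (2 * T)^-1 ^+ nu =
   2 ^+ nu * (M1 + M2) / ((1 + D ^+ 2) * (2 * T) ^+ nu).
  by rewrite /hh exprVn invfM mulrA.
rewrite ler_pdivlMr // mulrA; exact: key.
Qed.
End Sc.
Section Coer.
Variable R : realType.

Lemma cont_sum n (F : 'I_n -> 'rV[R]_n -> R) (s : seq 'I_n) :
  (forall i, continuous (F i)) -> continuous (fun v => \sum_(i <- s) F i v).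
Proof.
move=> cF; elim: s => [|a s IH].
  under eq_fun do rewrite big_nil; exact: cst_continuous.
under eq_fun do rewrite big_cons.
by move=> x; apply: continuousD; [exact: cF|exact: IH].
Qed.

Definition Qf n (U : 'M[R]_n) (c : 'I_n -> R) := \sum_i \sum_j c i * U i j * c j.
Definition Nf n (c : 'I_n -> R) := \sum_i c i ^+ 2.

Lemma posdefQ n (U : 'M[R]_n) (c : 'I_n -> R) :
  ((\col_i c i)^T *m U *m (\col_i c i)) ord0 ord0 = Qf U c.
Proof.
rewrite !mxE /Qf exchange_big /=; apply: eq_bigr => j _.
rewrite !mxE big_distrl /=; apply: eq_bigr => i _; by rewrite !mxE.
Qed.

Lemma coercive n (U : 'M[R]_n) : posdef U ->
  exists2 lam, 0 < lam & forall c, lam * Nf c <= Qf U c.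
Proof.
case: n U => [|n] U [_ pd].
  by exists 1 => // c; rewrite /Nf /Qf !big_ord0 mulr0.
pose Q (v : 'rV[R]_n.+1) := Qf U (fun i => v ord0 i).
pose N (v : 'rV[R]_n.+1) := Nf (fun i => v ord0 i).
have cQ : continuous Q.
  apply: cont_sum => i; apply: cont_sum => j x.
  apply: (@continuousM _ _ (fun v : 'rV[R]_n.+1 => v ord0 i * U i j) (fun v => v ord0 j)); last exact: coord_continuous.
  apply: (@continuousM _ _ (fun v : 'rV[R]_n.+1 => v ord0 i) (fun v => U i j)); first exact: coord_continuous.
  exact: cst_continuous.
have cN : continuous N.
  apply: cont_sum => i x.
  have := (@continuousM _ _ (fun v : 'rV[R]_n.+1 => v ord0 i) (fun v => v ord0 i) x (@coord_continuous _ _ _ ord0 i x) (@coord_continuous _ _ _ ord0 i x)).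
  by [].
pose A := N @^-1` [set 1].
have A0 : A !=set0.
  exists (\row_j (j == ord0)%:R); rewrite /A /N /Nf /= (bigD1 ord0) //= big1.
    by rewrite !mxE eqxx expr1n addr0.
  by move=> i /negbTE; rewrite !mxE => ->; rewrite expr0n.
have cA : compact A.
  apply: bounded_closed_compact; last first.
    by apply: preimage_closed; [move=> x _; exact: cN | exact: closed_eq].
  change (\forall M \near +oo, globally A [set x | `|x| <= M]).
  near=> M => v /= Av.
  rewrite [X in X <= _]/Num.norm /= mx_normrE; apply: bigmax_le => [|ij _]; first by [].
  have le1 : `|v ij.1 ij.2| <= 1.
    rewrite !ord1 -(expr_le1 (n:=2)) // real_normK ?num_real //.
    rewrite -Av /N /Nf (bigD1 ij.2) //= lerDl.
    by apply: sumr_ge0 => i _; exact: sqr_ge0.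
  apply: le_trans le1 _; near: M; exact: nbhs_pinfty_ge.
have [c0 c0A minQ] := EVT_min_rV A0 cA (continuous_subspaceT cQ).
exists (Q c0).
  have := pd (\col_i c0 ord0 i); rewrite posdefQ; apply.
  apply/negP => /eqP c00; move: c0A; rewrite inE /A /=.
  suff -> : N c0 = 0 by move/esym/eqP; rewrite oner_eq0.
  rewrite /N /Nf big1 // => i _.
  by move/matrixP: c00 => /(_ i ord0); rewrite !mxE => ->; rewrite expr0n.
move=> c; have Nc0 : 0 <= Nf c by apply: sumr_ge0 => i _; exact: sqr_ge0.
have [N0|N0] := eqVneq (Nf c) 0.
  have ci0 i : c i = 0.
    have /psumr_eq0P := N0; move=> /(_ (fun i _ => sqr_ge0 (c i))) /(_ i isT).
    by move/eqP; rewrite sqrf_eq0 => /eqP.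
  by rewrite N0 mulr0 /Qf big1 // => i _; rewrite big1 // => j _; rewrite ci0 !mul0r.
have Np : 0 < Nf c by rewrite lt_def N0.
pose s := Num.sqrt (Nf c).
have s2 : s ^+ 2 = Nf c by rewrite sqr_sqrtr.
have s0 : s != 0 by rewrite sqrtr_eq0 -ltNge.
pose t := \row_i (c i / s) : 'rV[R]_n.+1.
have NtE : N t = Nf c / s ^+ 2.
  rewrite /N /Nf mulr_suml; apply: eq_bigr => i _; by rewrite mxE expr_div_n.
have QtE : Q t = Qf U c / s ^+ 2.
  rewrite /Q /Qf mulr_suml; apply: eq_bigr => i _; rewrite mulr_suml.
  apply: eq_bigr => j _; rewrite !mxE expr2 /=; field; exact: s0.
have tA : t \in A by rewrite inE /A /= NtE s2 divff.
have := minQ t tA; rewrite QtE s2 ler_pdivlMr // mulrC.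
Unshelve. all: by end_near.
Qed.
End Coer.
Section LF.
Variable R : realType.
Variable p : nat.
Variable E : rel 'I_p.
Variables (x : 'I_p -> 'I_p -> R) (D : 'I_p -> R).

Lemma Lcols_lt m (i j : 'I_p) : (j < m)%N ->
  Lcols E x D m i j = Lcols E x D j.+1 i j.
Proof.
elim: m => [//|m IH] jm.
rewrite [LHS]/= mxE.
case: ltnP => jm'; first by rewrite IH.
have e : m = j by apply/eqP; rewrite eqn_leq jm'; rewrite ltnS in jm; rewrite jm.
subst m. rewrite eqxx /= mxE ltnn eqxx. by [].
Qed.

Lemma Lmat_col (i j : 'I_p) : Lmat E x D i j =
  if i == j then 1 else if (i < j)%N then 0 else if E i j then x i j
  else - (\sum_(k < p | (k < j)%N) Lcols E x D j i k * Lcols E x D j j k * D k) / D j.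
Proof.
rewrite /Lmat Lcols_lt // /= mxE ltnn eqxx.
by [].
Qed.

Lemma Lmat_diag i : Lmat E x D i i = 1.
Proof. by rewrite Lmat_col eqxx. Qed.

Lemma Lmat_up (i j : 'I_p) : (i < j)%N -> Lmat E x D i j = 0.
Proof. by move=> ij; rewrite Lmat_col ij; case: eqP => // /(congr1 val) /= e; move: ij; rewrite e ltnn. Qed.

Lemma Lmat_ind (i j : 'I_p) : (j < i)%N -> E i j -> Lmat E x D i j = x i j.
Proof.
move=> ji Eij; rewrite Lmat_col Eij ltnNge (ltnW ji) /=.
by case: eqP => // /(congr1 val) /= e; move: ji; rewrite e ltnn.
Qed.
End LF.
Section Iint.
Local Open Scope ereal_scope.
Variable R : realType.
Variable p : nat.
Let mu := @lebesgue_measure R.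

Lemma mono_int (D : set R) (f g : R -> \bar R) :
  (forall x, D x -> 0 <= f x) -> (forall x, D x -> f x <= g x) ->
  \int[mu]_(x in D) f x <= \int[mu]_(x in D) g x.
Proof.
move=> f0 fg.
have g0 : forall x, D x -> 0 <= g x by move=> x Dx; exact: le_trans (f0 x Dx) (fg x Dx).
rewrite (ge0_integralE mu f0) (ge0_integralE mu g0).
apply: ereal_sup_le => _ [h hf <-]; exists h => // x.
apply: le_trans (hf x) _.
rewrite /patch; case: ifP => //.
by rewrite inE => /fg.
Qed.

Lemma iint_ge0 s (f : (nat -> R) -> \bar R) v :
  (forall w, 0 <= f w) -> 0 <= iint p s f v.
Proof.
move=> f0; elim: s v => [|k s IH] v //=.
by apply: integral_ge0 => t _; exact: IH.
Qed.

Lemma iint_le s (f g : (nat -> R) -> \bar R) v :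
  (forall w, 0 <= f w) ->
  (forall w, (forall k, k \in s -> coord_dom p k (w k)) ->
             (forall k, k \notin s -> w k = v k) -> f w <= g w) ->
  iint p s f v <= iint p s g v.
Proof.
move=> f0; elim: s v => [|k s IH] v /= fg.
  by apply: fg => // k; rewrite in_nil.
apply: mono_int => [t _|t Dt]; first exact: iint_ge0.
apply: IH => w ws wv; apply: fg => k'.
  rewrite inE => /orP[/eqP->|]; last exact: ws.
  case: (boolP (k \in s)) => [/ws //|/wv ->]; by rewrite eqxx.
rewrite inE negb_or => /andP[kk' ks]; rewrite wv //.
by rewrite (negbTE kk').
Qed.

Definition II (n : nat) : R := (if (n < p)%N then pi / 2 else pi)%R.

Lemma hh_ge0 (t : R) : (0 <= hh t)%R.
Proof. by rewrite /hh invr_ge0 addr_ge0 // sqr_ge0. Qed.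

Lemma hh_cont : continuous (@hh R).
Proof. exact: continuous_oneDsqrV. Qed.

Lemma int_hh n : \int[mu]_(t in coord_dom p n) (hh t)%:E = (II n)%:E.
Proof.
rewrite /coord_dom /II; case: ifP => _.
  rewrite integral_itv_obnd_cbnd; last first.
    apply/measurable_EFinP; apply: measurable_funTS; exact: (continuous_measurable_fun hh_cont).
  exact: integral0y_oneDsqr.
rewrite ge0_symfun_integralT //.
- rewrite -set_itvcy integral0y_oneDsqr -EFinM; congr EFin.
  by rewrite mulrC -mulrA mulVf ?mulr1.
- by move=> x; exact: hh_ge0.
- exact: hh_cont.
- by move=> x /=; rewrite /hh sqrrN.
Qed.

Lemma iint_prod s : uniq s -> forall (F : (nat -> R) -> R) v,
  (forall w, (0 <= F w)%R) ->
  (forall w, (forall n, n \notin s -> w n = v n) -> F w = F v) ->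
  iint p s (fun w => (F w * \prod_(n <- s) hh (w n))%:E) v =
  (F v * \prod_(n <- s) II n)%:E.
Proof.
elim: s => [|k s IH] /=; first by move=> _ F v _ _; rewrite !big_nil.
move=> /andP[ks us] F v F0 Fv.
pose F' w := (F w * hh (w k))%R.
have F'0 w : (0 <= F' w)%R by rewrite /F' mulr_ge0 // hh_ge0.
have eF : (fun w => (F w * \prod_(n <- k :: s) hh (w n))%:E) =
          (fun w => (F' w * \prod_(n <- s) hh (w n))%:E).
  by apply: funext => w; rewrite big_cons /F' mulrA.
rewrite eF.
transitivity (\int[mu]_(t in coord_dom p k) ((F v * \prod_(n <- s) II n)%:E * (hh t)%:E)).
  apply: eq_integral => t _.
  pose v' := (fun n => if n == k then t else v n).
  have Fv' : F v' = F v.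
    apply: Fv => n nks; rewrite /v'.
    by case: eqP => // nk; rewrite nk inE eqxx in nks.
  have F'v : forall w, (forall n, n \notin s -> w n = v' n) -> F' w = F' v'.
    move=> w wv; rewrite /F' (wv k ks) Fv'; congr (_ * _)%R.
    apply: Fv => n; rewrite inE negb_or => /andP[nk ns].
    by rewrite wv // /v' (negbTE nk).
  rewrite (IH us F' v' F'0 F'v) /F' /v' eqxx -/v' Fv' -EFinM.
  by congr EFin; rewrite mulrAC.
rewrite ge0_integralZl_EFin //; last first.
  - by rewrite mulr_ge0 // ?F0 // prodr_ge0 // => n _; rewrite /II; case: ifP => _; rewrite ?divr_ge0 // pi_ge0.
  - apply/measurable_EFinP; apply: measurable_funTS; exact: (continuous_measurable_fun hh_cont).
  - by move=> x _; rewrite lee_fin hh_ge0.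
  - by rewrite /coord_dom; case: ifP => _; [exact: measurable_itv | exact: measurableT].
rewrite int_hh -EFinM big_cons; congr EFin.
by rewrite [(II k * _)%R]mulrC mulrA.
Qed.
End Iint.

Section Main.
Variables (R : realType) (p : nat) (E : rel 'I_p) (U : 'M[R]_p) (delta : 'I_p -> R).

Definition Lw (w : nat -> R) := Lmat E (xof w) (Dof w).
Definition Tw w (k : 'I_p) := Nf (fun i => Lw w i k).
Definition quad w := \sum_(i < p) \sum_(j < p) U i j *
  \sum_(k < p | (k <= i)%N && (k <= j)%N) Lw w i k * Lw w j k * Dof w k.

Lemma pistar_eq w : pistar E U delta (xof w) (Dof w) =
  (\prod_j Dof w j `^ ((delta j + 2 * (nu E j)%:R) / 2)) * expR (- (1/2) * quad w).
Proof. by []. Qed.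

Lemma quad_eq w : quad w = \sum_k Dof w k * Qf U (fun i => Lw w i k).
Proof.
rewrite /quad.
transitivity (\sum_i \sum_j U i j * \sum_k Lw w i k * Lw w j k * Dof w k).
  apply: eq_bigr => i _; apply: eq_bigr => j _; congr (_ * _).
  rewrite big_mkcond; apply: eq_bigr => k _; case: ifP => // h.
  move/negbT: h; rewrite negb_and -!ltnNge => /orP[ik|jk].
    by rewrite /Lw Lmat_up // !mul0r.
  by rewrite /Lw (Lmat_up _ _ _ jk) mulr0 mul0r.
transitivity (\sum_k \sum_i \sum_j Dof w k * (Lw w i k * U i j * Lw w j k)).
  under eq_bigr do under eq_bigr do rewrite mulr_sumr.
  under eq_bigr do rewrite exchange_big.
  rewrite exchange_big; apply: eq_bigr => k _; apply: eq_bigr => i _.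
  by apply: eq_bigr => j _; ring.
apply: eq_bigr => k _; rewrite /Qf mulr_sumr; apply: eq_bigr => i _.
by rewrite mulr_sumr.
Qed.

Lemma omega_eq w i j : Omega E (xof w) (Dof w) i j =
  \sum_k Lw w i k * Dof w k * Lw w j k.
Proof.
rewrite /Omega mul_mx_diag mxE; apply: eq_bigr => k _; by rewrite !mxE.
Qed.

Lemma T_ge_sq w k i : Lw w i k ^+ 2 <= Tw w k.
Proof.
rewrite /Tw /Nf (bigD1 i) //= lerDl; apply: sumr_ge0 => l _; exact: sqr_ge0.
Qed.

Lemma T_ge1 w k : 1 <= Tw w k.
Proof. by have := T_ge_sq w k k; rewrite /Lw Lmat_diag expr1n. Qed.

Lemma absOmega (w : nat -> R) i j : (forall k : 'I_p, 0 <= w k) ->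
  `|Omega E (xof w) (Dof w) i j| <= \sum_k Dof w k * Tw w k.
Proof.
move=> w0; rewrite omega_eq; apply: le_trans (ler_norm_sum _ _ _) _.
apply: ler_sum => k _; rewrite /Dof normrM normrM (ger0_norm (w0 k)).
have h1 := T_ge_sq w k i; have h2 := T_ge_sq w k j.
have key : `|Lw w i k| * `|Lw w j k| <= Tw w k.
  have := sqr_ge0 (`|Lw w i k| - `|Lw w j k|).
  rewrite -[Lw w i k ^+ 2]real_normK ?num_real // in h1.
  rewrite -[Lw w j k ^+ 2]real_normK ?num_real // in h2.
  move=> h; nra.
rewrite mulrAC [w k * _]mulrC; exact: (ler_wpM2r (w0 k)) _ _ key.
Qed.


Lemma quad_ge lam (w : nat -> R) : (forall c, lam * Nf c <= Qf U c) ->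
  (forall k : 'I_p, 0 <= w k) -> lam * \sum_k Dof w k * Tw w k <= quad w.
Proof.
move=> hl w0; rewrite quad_eq mulr_sumr; apply: ler_sum => k _.
rewrite /Dof mulrCA; exact: (ler_wpM2l (w0 k)) _ _ (hl _).
Qed.

Lemma coords_uniq : uniq (coords E).
Proof.
rewrite /coords cat_uniq iota_uniq /=; apply/andP; split.
  apply/hasPn => n /mapP [ij _ ->]; rewrite mem_iota /= -leqNgt -addnA.
  exact: leq_addr.
rewrite map_inj_in_uniq ?enum_uniq // => [[i j] [i' j']] _ _ /= /eqP.
rewrite -!addnA eqn_add2l => /eqP h.
have hp : (0 < p)%N := leq_ltn_trans (leq0n i) (ltn_ord i).
have e1 : i = i' :> nat.
  have := congr1 (divn^~ p) h.
  by rewrite !divnMDl // !divn_small // !addn0.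
have e2 : j = j' :> nat.
  have := congr1 (modn^~ p) h.
  by rewrite !modnMDl !modn_small.
by congr pair; apply: val_inj.
Qed.

Lemma coords_prod (w : nat -> R) : \prod_(n <- coords E) hh (w n) =
  \prod_(k < p) hh (w k) *
  \prod_(k < p) \prod_(i < p | (k < i)%N && E i k) hh (xof w i k).
Proof.
rewrite /coords big_cat /=; congr (_ * _).
  have -> : iota 0 p = index_iota 0 p by rewrite /index_iota subn0.
  by rewrite big_mkord.
rewrite big_map big_enum /=.
transitivity (\prod_(i < p) \prod_(k < p | (k < i)%N && E i k) hh (xof w i k)).
  by rewrite [RHS]pair_big_dep /=; apply: eq_bigl => -[a b].
rewrite (exchange_big_dep predT) //=.
Qed.


Lemma core c : (forall i, 0 < delta i) -> 0 < c -> exists2 C, 0 <= C &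
  forall w : nat -> R, (forall k : 'I_p, 0 < w k) ->
  \prod_k (Dof w k `^ ((delta k + 2 * (nu E k)%:R) / 2) *
           expR (- c * (Dof w k * Tw w k))) <= C * \prod_(n <- coords E) hh (w n).
Proof.
move=> d0 c0.
have hk : forall k : 'I_p, exists C : R, 0 <= C /\
   (forall D T (P : pred 'I_p) (xs : 'I_p -> R), #|P| = nu E k -> 0 < D -> 1 <= T ->
     (forall i, P i -> xs i ^+ 2 <= T) ->
     D `^ ((delta k + 2 * (nu E k)%:R) / 2) * expR (- c * (D * T)) <=
     C * hh D * \prod_(i | P i) hh (xs i)).
  move=> k; have [C C0 HC] := perk (nu E k) (d0 k) c0.
  by exists C; split => // D T P xs; exact: HC.
have [Cf HCf] := choice hk.
exists (\prod_k Cf k); first by apply: prodr_ge0 => k _; case: (HCf k).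
move=> w w0.
apply: (@le_trans _ _ (\prod_k (Cf k * hh (w k) *
   \prod_(i < p | (k < i)%N && E i k) hh (xof w i k)))).
  apply: ler_prod => k _; apply/andP; split.
    by rewrite mulr_ge0 ?powR_ge0 ?expR_ge0.
  case: (HCf k) => _ H; apply: H.
  - by rewrite /nu; apply: eq_card => i; apply/idP/idP => [h|/set_mem h]; [apply: mem_set; exact: h | exact: h].
  - exact: w0.
  - exact: T_ge1.
  - move=> i /andP[ki Eik].
    have -> : xof w i k = Lw w i k by rewrite /Lw Lmat_ind.
    exact: T_ge_sq.
by rewrite coords_prod !big_split /= mulrA.
Qed.

End Main.

Local Close Scope classical_set_scope.

Theorem theorem1 (R : realType) (p : nat) (E : rel 'I_p) (U : 'M[R]_p)
  (delta : 'I_p -> R) :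
  undirected_graph E -> posdef U -> (forall i, 0 < delta i) ->
  (integral_LD E
     (fun v => (pistar E U delta (xof v) (Dof v))%:E) < +oo)%E /\
  (forall i j : 'I_p,
     integral_LD E
       (fun v => (`|Omega E (xof v) (Dof v) i j| *
                  pistar E U delta (xof v) (Dof v))%:E) < +oo)%E.
Proof.
move=> _ Upd d0.
have [lam lam0 hl] := coercive Upd.
pose A (w : nat -> R) (k : 'I_p) := Dof w k `^ ((delta k + 2 * (nu E k)%:R) / 2).
pose Y (w : nat -> R) := \sum_k Dof w k * Tw E w k.
have A0 w k : 0 <= A w k by exact: powR_ge0.
have pi0 w : 0 <= pistar E U delta (xof w) (Dof w).
  rewrite pistar_eq; apply: mulr_ge0; last exact: expR_ge0.
  by apply: prodr_ge0 => k _; exact: powR_ge0.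
have dom (w : nat -> R) : (forall k, k \in coords E -> coord_dom p k (w k)) -> forall k : 'I_p, 0 < w k.
  move=> h k; have := h k; rewrite /coords mem_cat mem_iota /= add0n ltn_ord.
  by move=> /(_ isT); rewrite /coord_dom ltn_ord /= in_itv /= andbT.
have Y0 (w : nat -> R) : (forall k : 'I_p, 0 < w k) -> 0 <= Y w.
  move=> w0; apply: sumr_ge0 => k _; apply: mulr_ge0; first exact: ltW (w0 k).
  exact: le_trans ler01 (T_ge1 E w k).
have bnd (w : nat -> R) (c : R) : 0 <= c -> c <= lam -> (forall k : 'I_p, 0 < w k) ->
    pistar E U delta (xof w) (Dof w) <= (\prod_k A w k) * expR (- (c / 2) * Y w).
  move=> c0 cl w0; rewrite pistar_eq; apply: ler_wpM2l.
    by apply: prodr_ge0 => k _; exact: A0.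
  rewrite ler_expR.
  have := quad_ge E (hl) (fun k => ltW (w0 k)); rewrite -/(Y w).
  have : c * Y w <= lam * Y w by rewrite ler_wpM2r // Y0.
  lra.
have prodAE (w : nat -> R) (c : R) : (\prod_k A w k) * expR (- c * Y w) =
    \prod_k (A w k * expR (- c * (Dof w k * Tw E w k))).
  rewrite big_split /=; congr (_ * _); rewrite -expR_sum; congr expR.
  by rewrite /Y mulr_sumr.
have fin (C : R) : 0 <= C -> (integral_LD E (fun w => (C * \prod_(n <- coords E) hh (w n))%:E) < +oo)%E.
  move=> C0; rewrite /integral_LD (@iint_prod R p (coords E) (coords_uniq E) (fun _ => C) (fun _ => 0)) //.
  exact: ltry.
split.
  have [C C0 HC] := core E d0 (divr_gt0 lam0 (ltr0n _ 2)).
  apply: le_lt_trans (fin C C0).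
  rewrite /integral_LD; apply: (@iint_le R p (coords E) _ _ (fun _ => 0)) => [w|w wd _]; first by rewrite lee_fin.
  have w0 := dom w wd.
  rewrite lee_fin; apply: le_trans (bnd w lam (ltW lam0) (lexx _) w0) _.
  by rewrite prodAE; exact: HC.
move=> i j.
have [C C0 HC] := core E d0 (divr_gt0 lam0 (ltr0n _ 4)).
have [M HM] := @powexp_bound R 1 (lam / 4) ler01 (divr_gt0 lam0 (ltr0n _ 4)).
have M0 : 0 <= M by apply: le_trans (HM 0 (lexx _)); rewrite mulr_ge0 ?powR_ge0 ?expR_ge0.
apply: le_lt_trans (fin (M * C) (mulr_ge0 M0 C0)).
rewrite /integral_LD; apply: (@iint_le R p (coords E) _ _ (fun _ => 0)) => [w|w wd _]; first by rewrite lee_fin mulr_ge0.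
have w0 := dom w wd.
rewrite lee_fin.
apply: (@le_trans _ _ (Y w * ((\prod_k A w k) * expR (- (lam / 2) * Y w)))).
  apply: ler_pM => //; first exact: absOmega (fun k => ltW (w0 k)).
  exact: bnd w lam (ltW lam0) (lexx _) w0.
have -> : Y w * (\prod_k A w k * expR (- (lam / 2) * Y w)) =
   (Y w `^ 1 * expR (- (lam / 4) * Y w)) * ((\prod_k A w k) * expR (- (lam / 4) * Y w)).
  have e : expR (- (lam / 2) * Y w) = expR (- (lam / 4) * Y w) * expR (- (lam / 4) * Y w).
    by rewrite -expRD; congr expR; field.
  by rewrite powRr1 ?Y0 // e; ring.
rewrite -[M * C * _]mulrA; apply: ler_pM.
- by apply: mulr_ge0; [exact: powR_ge0 | exact: expR_ge0].
- apply: mulr_ge0; last exact: expR_ge0.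
  by apply: prodr_ge0 => k _; exact: A0.
- exact: HM (Y0 w w0).
- by rewrite prodAE; exact: HC.
Qed.
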